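(* Let $n\ge1$ and $\alpha=\beta=1$. For every $\mathcal{C}\in\{\bullet,\circ\}^n$ and every $T\in\mathcal{T}_n$ with $R(T)=\mathcal{C}$, we have $$\sum_{\mathcal{C}'}W(\mathcal{C}\to\mathcal{C}')=|f^{-1}\{T\}|,$$ which is the number of last branching vertices of $T$. Consequently, $$|R^{-1}\{\mathcal{C}\}|\sum_{\mathcal{C}'}W(\mathcal{C}\to\mathcal{C}')=|(R\circ f)^{-1}\{\mathcal{C}\}|.$$
   Context: Open-boundary TASEP on $n$ sites: this is the continuous-time Markov chain on $\{\bullet,\circ\}^n$ (strings of length $n$, where $\bullet$ denotes a particle and $\circ$ a hole). Its transition rates are as follows, with $\mathcal{A},\mathcal{A}'$ arbitrary strings: - $W(\circ\mathcal{A}\to\bullet\mathcal{A})=\alpha$; - $W(\mathcal{A}\bullet\to\mathcal{A}\circ)=\beta$; - $W(\mathcal{A}\bullet\circ\mathcal{A}'\to\mathcal{A}\circ\bullet\mathcal{A}')=1$; - $W(\mathcal{C}\to\mathcal{C}')=0$ for all other pairs. A plane binary tree is a finite rooted tree in which every vertex is either an endpoint (a leaf, with no children) or has exactly two children, an ordered left child and right child. Every non-root vertex is thus either a left descendent or a right descendent of its parent. The endpoints are ordered from left to right in the planar order. $\mathcal{T}_n$ denotes the set of plane binary trees with exactly $n+2$ endpoints. The reduced configuration of $T\in\mathcal{T}_n$ is $R(T)=(t_1,\dots,t_n)\in\{\bullet,\circ\}^n$. Here $t_k=\bullet$ if the $(k+1)$-th endpoint from the left is a left child, and $t_k=\circ$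 if it is a right child. The leftmost and rightmost endpoints are ignored. A last branching vertex of a plane binary tree is a non-endpoint vertex both of whose children are endpoints. A marked tree is a pair $(T,v)$ with $T\in\mathcal{T}_n$ and $v$ a last branching vertex of $T$. The set of marked trees is $\widehat{\mathcal{T}}_n$. The map $f:\widehat{\mathcal{T}}_n\to\mathcal{T}_n$, $f(T,v)=T$, forgets the mark. *)

(* Defs.v *)
From HB Require Import structures.
From mathcomp Require Import all_boot all_order all_algebra.
Set Implicit Arguments. Unset Strict Implicit. Unset Printing Implicit Defensive.
Import Order.TTheory GRing.Theory Num.Theory.

Inductive tree := Leaf | Node of tree & tree.

Fixpoint tree_enc (t : tree) : GenTree.tree unit :=
  match t with
  | Leaf => GenTree.Node 0 [::]
  | Node l r => GenTree.Node 1 [:: tree_enc l; tree_enc r]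
  end.

Fixpoint tree_dec (g : GenTree.tree unit) : tree :=
  match g with
  | GenTree.Node 1 [:: l; r] => Node (tree_dec l) (tree_dec r)
  | _ => Leaf
  end.

Lemma tree_encK : cancel tree_enc tree_dec.
Proof. by elim=> //= l -> r ->. Qed.

HB.instance Definition _ := Countable.copy tree (can_type tree_encK).

Fixpoint nleaves (t : tree) : nat :=
  match t with Leaf => 1 | Node l r => nleaves l + nleaves r end.

Definition inTn (n : nat) (t : tree) : bool := nleaves t == n.+2.

(* For each endpoint, from left to right: true iff it is a left child.
   [b] is the status of the current subtree's root (irrelevant for the
   root of the whole tree; its value only matters if the tree is a single
   leaf, which is never the case in T_n). *)
Fixpoint leafdirs (b : bool) (t : tree) : seq bool :=
  match t with
  | Leaf => [:: b]
  | Node l r => leafdirs true l ++ leafdirs false r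
  end.

(* Reduced configuration R(T): drop the leftmost and rightmost endpoints.
   true = particle (bullet), false = hole (circ). *)
Definition Rconf (t : tree) : seq bool :=
  let s := leafdirs true t in behead (take (size s).-1 s).

(* Vertices of a tree, as paths from the root (false = go left,
   true = go right). *)
Fixpoint vertices (t : tree) : seq (seq bool) :=
  match t with
  | Leaf => [:: [::]]
  | Node l r => [::] :: [seq false :: p | p <- vertices l]
                     ++ [seq true :: p | p <- vertices r]
  end.

Fixpoint subtree (t : tree) (p : seq bool) : option tree :=
  match p, t with
  | [::], _ => Some t
  | false :: p', Node l _ => subtree l p'
  | true :: p', Node _ r => subtree r p'
  | _ :: _, Leaf => None
  end.

Definition is_lbv (t : tree) (p : seq bool) : bool :=
  subtree t p == Some (Node Leaf Leaf).

Definition lbvs (t : tree) : seq (seq bool) := [seq p <- vertices t | is_lbv t p].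

Definition marked (Tn : seq tree) : seq (tree * seq bool) :=
  [seq (T, v) | T <- Tn, v <- lbvs T].

Definition fmark (x : tree * seq bool) : tree := x.1.

(* TASEP transition rates on configurations C, C' (seq bool,
   true = particle). *)
Definition entry (C C' : seq bool) : bool :=
  (C == false :: behead C) && (C' == true :: behead C).
Definition exit (C C' : seq bool) : bool :=
  (C == rcons (take (size C).-1 C) true) &&
  (C' == rcons (take (size C).-1 C) false).
Definition hop (C C' : seq bool) : bool :=
  has (fun i => (C == take i C ++ [:: true; false] ++ drop i.+2 C) &&
                (C' == take i C ++ [:: false; true] ++ drop i.+2 C))
      (iota 0 (size C).-1).

Definition W {R : nzSemiRingType} (alpha beta : R) (C C' : seq bool) : R :=
  if entry C C' then alpha
  else if exit C C' then beta
  else if hop C C' then 1%R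
  else 0%R.

(* Main.v *)
Require Import Defs.
From HB Require Import structures.
From mathcomp Require Import all_boot all_order all_algebra.
From mathcomp Require Import zify.
Import Order.TTheory GRing.Theory Num.Theory.

Fixpoint des (s : seq bool) : nat := if s is x :: t then (x && ~~ head true t) + des t else 0.

Lemma des_cat s1 s2 : des (s1 ++ s2) = des s1 + des s2 + (last false s1 && ~~ head true s2).
Proof.
elim: s1 => [|x t IH] /=; first by rewrite addn0.
rewrite IH; case: t IH => [|y u] _ /=.
  by case: x; rewrite /= ?andbF !addn0 ?add0n // addnC.
by rewrite !addnA.
Qed.

Lemma head_leafdirs_cat x0 b t s : head x0 (leafdirs b t ++ s) = if t is Node _ _ then true else b.
Proof.
elim: t b s => [|l IHl r IHr] b s //=.
by rewrite -catA IHl; case: (l).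
Qed.

Lemma head_leafdirs x0 b t : head x0 (leafdirs b t) = if t is Node _ _ then true else b.
Proof. by rewrite -(cats0 (leafdirs b t)) head_leafdirs_cat. Qed.

Lemma last_leafdirs x0 b t : last x0 (leafdirs b t) = if t is Node _ _ then false else b.
Proof.
elim: t b x0 => [|l IHl r IHr] b x0 //=.
by rewrite last_cat IHr; case: (r).
Qed.

Lemma size_leafdirs b t : size (leafdirs b t) = nleaves t.
Proof. by elim: t b => [|l IHl r IHr] b //=; rewrite size_cat IHl IHr. Qed.

Lemma lbvs_Node l r : size (lbvs (Node l r)) =
  ((l == Leaf) && (r == Leaf)) + size (lbvs l) + size (lbvs r).
Proof.
rewrite /lbvs /= filter_cat !filter_map.
have E : is_lbv (Node l r) [::] = (l == Leaf) && (r == Leaf).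
  rewrite /is_lbv /=.
  case: (l) => [|a b]; case: (r) => [|c d]; rewrite ?eqxx //;
  by apply/eqP => -[].
rewrite E; case: ((l == Leaf) && (r == Leaf)) => /=;
by rewrite ?size_cat !size_map.
Qed.

Lemma des_leafdirs b t : des (leafdirs b t) = size (lbvs t).
Proof.
elim: t b => [|l IHl r IHr] b /=.
  by case: b.
rewrite des_cat IHl IHr lbvs_Node last_leafdirs head_leafdirs.
case: l {IHl} => [|a c]; case: r {IHr} => [|d e] /=; rewrite ?eqxx; try lia.
Qed.

Lemma leafdirs_Rconf T : 1 < nleaves T ->
  leafdirs true T = true :: rcons (Rconf T) false.
Proof.
case: T => [//|l r] _.
have Hh := head_leafdirs false true (Node l r).
have Hl := last_leafdirs false true (Node l r).
have Hs : 1 < size (leafdirs true (Node l r)).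
  have P : forall t, 0 < nleaves t by elim=> //= a Ha b Hb; lia.
  rewrite size_leafdirs /=; have := P l; have := P r; lia.
rewrite /Rconf.
move: Hh Hl Hs; case: (leafdirs true (Node l r)) => [//|a u] /= -> {a}.
case/lastP: u => [//|m z]; rewrite last_rcons => -> _.
by rewrite size_rcons /= -cats1 take_size_cat // cats1.
Qed.

Definition gen (a b : bool) i (C : seq bool) := take i C ++ [:: a; b] ++ drop i.+2 C.

Lemma nth_gen x0 a b i C k : i.+1 < size C ->
  nth x0 (gen a b i C) k = if k == i then a else if k == i.+1 then b else nth x0 C k.
Proof.
move=> Hi; rewrite /gen nth_cat size_takel; last by lia.
case: ltnP => Hk.
  rewrite nth_take //.
  have -> : (k == i) = false by lia.
  by have -> : (k == i.+1) = false by lia.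
case E: (k - i) => [|[|j]] /=.
- by have -> : (k == i) = true by lia.
- have -> : (k == i) = false by lia.
  by have -> : (k == i.+1) = true by lia.
- have -> : (k == i) = false by lia.
  have -> : (k == i.+1) = false by lia.
  rewrite nth_drop; congr nth; lia.
Qed.

Lemma size_gen a b i C : i.+1 < size C -> size (gen a b i C) = size C.
Proof. move=> Hi; rewrite /gen !size_cat size_takel /= ?size_drop; lia. Qed.

Lemma hc_iff i C : i.+1 < size C ->
  (C == gen true false i C) = nth false C i && ~~ nth false C i.+1.
Proof.
move=> Hi; apply/eqP/andP.
  move=> E; have h1 := nth_gen false true false i C i Hi.
  have h2 := nth_gen false true false i C i.+1 Hi.
  rewrite -E eqxx in h1 h2; rewrite h1 h2.
  split => //; have -> : (i.+1 == i) = false by lia.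
  by rewrite eqxx.
move=> [H1 H2]; apply: (eq_from_nth (x0 := false)); first by rewrite size_gen.
move=> k Hk; rewrite nth_gen //.
case: eqP => [->|_] //; case: eqP => [->|_] //.
by move/negbTE: H2.
Qed.

Definition htg C := [seq gen false true i C | i <- iota 0 (size C).-1 & C == gen true false i C].
Definition etg (C : seq bool) := if C == false :: behead C then [:: true :: behead C] else [::].
Definition xtg (C : seq bool) := if C == rcons (take (size C).-1 C) true
  then [:: rcons (take (size C).-1 C) false] else [::].
Definition targets C := etg C ++ xtg C ++ htg C.

Lemma mem_targets C C' : (C' \in targets C) = [|| entry C C', exit C C' | hop C C'].
Proof.
rewrite /targets !mem_cat /etg /xtg /entry /exit.
congr [|| _, _ | _].
- by case: ifP; rewrite ?inE // andbC.
- by case: ifP; rewrite ?inE // andbC.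
rewrite /hop /htg; apply/mapP/hasP.
  move=> [i]; rewrite mem_filter => /andP[H1 H2] ->.
  by exists i => //; rewrite H1 eqxx.
move=> [i Hi /andP[H1 /eqP ->]]; exists i => //.
by rewrite mem_filter H1.
Qed.

Lemma des_count s : des s = count (fun i => nth false s i && ~~ nth false s i.+1) (iota 0 (size s).-1).
Proof.
elim: s => [|x t IH] //=.
case: t IH => [|y u] IH /=; first by rewrite andbF.
congr addn; rewrite -/(des (y :: u)) IH /= -[1]/(1 + 0) iotaDl count_map.
apply: eq_count => i; rewrite /preim; exact: erefl.
Qed.

Lemma des_rcons s : des (rcons s false) = des s + last false s.
Proof.
by rewrite -cats1 des_cat /= andbT !addn0.
Qed.

Lemma size_xtg C : C != [::] -> size (xtg C) = last false C.
Proof.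
rewrite /xtg; case/lastP: C => [//|c y] _.
rewrite size_rcons /= -cats1 take_size_cat // cats1 eqseq_rcons eqxx /= last_rcons.
by case: y.
Qed.

Lemma size_targets C : C != [::] -> size (targets C) = des (true :: rcons C false).
Proof.
move=> HC; rewrite /targets !size_cat size_xtg //= des_rcons.
rewrite /htg size_map size_filter des_count.
rewrite (@eq_in_count _ _ (fun i => nth false C i && ~~ nth false C i.+1)); last first.
  move=> i; rewrite mem_iota add0n -subn1 ltn_subRL add1n => /andP[_ Hi]; exact: hc_iff.
case: C HC => [//|x t] _ /=; rewrite /etg eqseq_cons eqxx andbT.
case: x => /=; set c := count _ _; set l := last _ t; by rewrite (addnC l).
Qed.

Lemma mem_htg (C : seq bool) x : x \in htg C ->
  exists2 i, i.+1 < size C & (x = gen false true i C) /\ nth false C i /\ ~~ nth false C i.+1.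
Proof.
case/mapP => i; rewrite mem_filter mem_iota add0n -subn1 ltn_subRL add1n.
move=> /andP[Hc /andP[_ Hi]] ->; exists i => //.
by move: Hc; rewrite hc_iff // => /andP[-> ->].
Qed.

Lemma uniq_htg C : uniq (htg C).
Proof.
rewrite /htg map_inj_in_uniq ?filter_uniq ?iota_uniq //.
have key : forall i j, i.+1 < size C -> j.+1 < size C -> nth false C i -> i < j ->
    gen false true i C != gen false true j C.
  move=> i j Hi Hj Ci Hij; apply/eqP => E.
  have := nth_gen false false true j C i Hj.
  rewrite -E nth_gen // eqxx.
  have -> : (i == j) = false by lia.
  have -> : (i == j.+1) = false by lia.
  by rewrite Ci.
move=> i j; rewrite !mem_filter !mem_iota !add0n -!subn1 !ltn_subRL !add1n.
move=> /andP[Hci /andP[_ Hi]] /andP[Hcj /andP[_ Hj]] E.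
rewrite hc_iff // in Hci; rewrite hc_iff // in Hcj.
case: (ltngtP i j) => // Hij.
  by move: (key i j Hi Hj (proj1 (andP Hci)) Hij); rewrite E eqxx.
by move: (key j i Hj Hi (proj1 (andP Hcj)) Hij); rewrite E eqxx.
Qed.

Lemma uniq_targets (C : seq bool) : C != [::] -> uniq (targets C).
Proof.
move=> HC; rewrite /targets /etg /xtg.
have Hx : forall x, x \in htg C -> C == false :: behead C -> nth false x 0 = false.
  move=> x /mem_htg [i Hi [-> _]] /eqP E.
  rewrite nth_gen //; case: eqP => // _; rewrite E; by case: eqP.
have Hy : forall x, x \in htg C -> C == rcons (take (size C).-1 C) true ->
    nth false x (size C).-1 = true.
  move=> x /mem_htg [i Hi [-> _]] /eqP E.
  rewrite nth_gen //.
  have -> : ((size C).-1 == i) = false by rewrite -subn1; lia.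
  case: eqP => // _; rewrite {1}E nth_rcons size_takel; last by lia.
  by rewrite ltnn eqxx.
have HS : (size C).-1 <= size C by rewrite -subn1; lia.
have N1 : C == false :: behead C -> true :: behead C \notin htg C.
  by move=> He; apply/negP => /Hx /(_ He).
have N2 : C == rcons (take (size C).-1 C) true -> rcons (take (size C).-1 C) false \notin htg C.
  move=> Hl; apply/negP => H; have := Hy _ H Hl.
  by rewrite nth_rcons size_takel // ltnn eqxx.
have N3 : C == false :: behead C -> true :: behead C != rcons (take (size C).-1 C) false.
  move=> He; apply/eqP => E.
  have := congr1 (nth false ^~ 0) E; rewrite /= nth_rcons size_takel //.
  case: ltnP => H0.
    by rewrite nth_take // {1}(eqP He).
  have -> : (0 == (size C).-1) = true.
    by move: H0 HC; case: (C) => [|a [|b u]].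
  by [].
case: ifP => He; case: ifP => Hl => /=; rewrite ?inE ?negb_or ?N1 ?N2 ?N3 ?uniq_htg //.
Qed.

Lemma all_size_targets (C : seq bool) : C != [::] -> all (fun x => size x == size C) (targets C).
Proof.
move=> HC; rewrite /targets !all_cat; apply/and3P; split.
- rewrite /etg; case: ifP => // /eqP E /=; by rewrite {2}E eqxx.
- rewrite /xtg; case: ifP => //= _; rewrite size_rcons size_takel ?leq_pred //.
  by case: (C) HC => [|a t] //= _; rewrite eqxx.
- apply/allP => x /mem_htg [i Hi [-> _]]; by rewrite size_gen.
Qed.

Lemma sum_mem n (s : seq (seq bool)) : uniq s -> all (fun x => size x == n) s ->
  \sum_(C' : n.-tuple bool) ((val C' \in s) : nat) = size s.
Proof.
elim: s => [|a s IH] /=.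
  by move=> _ _; rewrite big1.
move=> /andP[Ha Hu] /andP[Hsa Hall].
rewrite -(IH Hu Hall) -add1n.
rewrite (eq_bigr (fun C' : n.-tuple bool => ((val C' == a) : nat) + (val C' \in s))); last first.
  move=> C' _; rewrite inE; case: eqP => [E|_] //=.
  by move: Ha; rewrite -E => /negbTE ->.
rewrite big_split /=; congr addn.
rewrite (bigD1 (Tuple Hsa)) //= eqxx big1 // => C' HC'.
apply/eqP; rewrite eqb0; apply: contra HC' => /eqP E.
by apply/eqP/val_inj.
Qed.

Local Open Scope ring_scope.
Lemma sum_W (R : numDomainType) n (C : n.-tuple bool) : (0 < n)%N ->
  \sum_(C' : n.-tuple bool) W (1 : R) 1 C C' = (des (true :: rcons C false))%:R.
Proof.
move=> Hn.
have HC : (val C != [::]) by rewrite -size_eq0 size_tuple -lt0n.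
rewrite (eq_bigr (fun C' : n.-tuple bool => ((val C' \in targets C) : nat)%:R)); last first.
  move=> C' _; rewrite mem_targets /W.
  by case: (entry _ _); case: (exit _ _); case: (hop _ _).
rewrite -natr_sum sum_mem ?size_targets ?uniq_targets //.
by have := @all_size_targets C HC; rewrite size_tuple.
Qed.

Local Close Scope ring_scope.

Lemma count_marked (P : pred tree) s :
  count (fun x => P x.1) (marked s) = \sum_(T <- s | P T) size (lbvs T).
Proof.
elim: s => [|a s IH]; first by rewrite big_nil.
rewrite /marked /= count_cat -/(marked s) IH big_cons.
have -> : count (fun x => P x.1) [seq (a, v) | v <- lbvs a] = if P a then size (lbvs a) else 0.
  by elim: (lbvs a) => [|v l /= ->]; case: (P a).
by case: (P a).
Qed.

Lemma core n (T : tree) (C : seq bool) : inTn n T -> Rconf T = C ->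
  des (true :: rcons C false) = size (lbvs T).
Proof.
rewrite /inTn => /eqP Hn <-.
by rewrite -leafdirs_Rconf ?Hn // des_leafdirs.
Qed.

Local Open Scope ring_scope.

Theorem mainTheorem3 (R : numDomainType) (n : nat) (Tn : seq tree) :
  (0 < n)%N ->
  uniq Tn -> (forall T, (T \in Tn) = inTn n T) ->
  (forall (C : n.-tuple bool) (T : tree), T \in Tn -> Rconf T = C ->
     \sum_(C' : n.-tuple bool) W (1 : R) 1 C C'
       = (count (fun x => fmark x == T) (marked Tn))%:R
     /\ count (fun x => fmark x == T) (marked Tn) = size (lbvs T))
  /\
  (forall C : n.-tuple bool,
     (count (fun T => Rconf T == C) Tn)%:R * \sum_(C' : n.-tuple bool) W (1 : R) 1 C C'
       = (count (fun x => Rconf (fmark x) == C) (marked Tn))%:R).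
Proof.
move=> Hn Hu HTn; split.
  move=> C T HT HR.
  have Hc : count (fun x => fmark x == T) (marked Tn) = size (lbvs T).
    rewrite (count_marked (fun T' => T' == T)) -big_filter.
    by rewrite (filter_pred1_uniq Hu HT) big_seq1.
  rewrite Hc; split => //.
  by rewrite sum_W // (@core n T) // -HTn.
move=> C.
rewrite (count_marked (fun T' => Rconf T' == C)).
have E : (\sum_(T' <- Tn | Rconf T' == C) size (lbvs T') =
    des (true :: rcons C false) * count (fun T => Rconf T == C) Tn)%N.
  rewrite big_seq_cond (eq_bigr (fun _ => des (true :: rcons C false))); last first.
    move=> T /andP[HT /eqP HR]; by rewrite (@core n T) // -HTn.
  by rewrite -big_seq_cond big_const_seq iter_addn_0.
by rewrite E natrM mulrC sum_W.
Qed.
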